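(* Let $n\ge1$ and $\gamma\in PSL(n+1,\mathbb{C})$ have a lift $\widetilde\gamma\in SL(n+1,\mathbb{C})$ which is diagonalizable and all of whose eigenvalues have modulus $1$. Then $\Lambda_{Kul}(\langle\gamma\rangle)=\emptyset$ if $\gamma$ has finite order, and $\Lambda_{Kul}(\langle\gamma\rangle)=\mathbb{P}^n_{\mathbb{C}}$ if $\gamma$ has infinite order.
   Context: For $\Gamma\subset PSL(n+1,\mathbb{C})$: a cluster point of $\Gamma z$ is a limit of $g_mz$ with pairwise distinct $g_m\in\Gamma$; $\Lambda(\Gamma)$ is the closure of the union of cluster points of $\Gamma z$ over all $z$; $L_2(\Gamma)$ is the closure of the union, over compact $K\subset\mathbb{P}^n_{\mathbb{C}}\setminus\Lambda(\Gamma)$, of cluster points of $\Gamma K$ (limits of $g_mk_m$, $g_m$ pairwise distinct, $k_m\in K$); $\Lambda_{Kul}(\Gamma)=\Lambda(\Gamma)\cup L_2(\Gamma)$. *)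

(* Defs.v *)
From HB Require Import structures.
From mathcomp Require Import all_boot all_order all_algebra.
From mathcomp Require Import complex.
From mathcomp Require Import reals.
Set Implicit Arguments. Unset Strict Implicit. Unset Printing Implicit Defensive.
Import Order.TTheory GRing.Theory Num.Theory.
Local Open Scope ring_scope.

Section Kulkarni.
Variables (R : realType) (n : nat).
Local Notation C := (R[i]).

(* Points of P^n_C are represented by nonzero column vectors of C^{n+1};
   all notions below are invariant under nonzero rescaling. *)
Definition pvec := 'cV[C]_(n.+1).

Definition vcvg (u : nat -> pvec) (v : pvec) : Prop :=
  forall e : C, 0 < e -> exists N : nat, forall m, (N <= m)%N ->
    forall i, `|u m i ord0 - v i ord0| < e.

(* Convergence in P^n_C (quotient topology): the sequence of points [x m]
   converges to [y] iff suitable representatives converge in C^{n+1}\{0}. *)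
Definition pcvg (x : nat -> pvec) (y : pvec) : Prop :=
  y != 0 /\ (forall m, x m != 0) /\
  exists c : nat -> C, (forall m, c m != 0) /\ vcvg (fun m => c m *: x m) y.

(* Closure in P^n_C (sequential closure; P^n_C is metrizable). *)
Definition pclosure (S : pvec -> Prop) : pvec -> Prop :=
  fun y => exists x : nat -> pvec, (forall m, S (x m)) /\ pcvg x y.

(* Compactness of the image of K\{0} in P^n_C (sequential compactness). *)
Definition pcompact (K : pvec -> Prop) : Prop :=
  forall x : nat -> pvec, (forall m, x m != 0 /\ K (x m)) ->
    exists phi : nat -> nat, (forall m, (phi m < phi m.+1)%N) /\
      exists y, K y /\ pcvg (fun m => x (phi m)) y.

(* Elements of PSL(n+1,C) = PGL(n+1,C) are represented by invertible
   matrices, identified up to a nonzero scalar. A subgroup Gamma is given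
   by a predicate on such representatives. *)
Definition mx_peq (A B : 'M[C]_(n.+1)) : Prop :=
  exists c : C, c != 0 /\ B = c *: A.

Definition pw_distinct (h : nat -> 'M[C]_(n.+1)) : Prop :=
  forall i j : nat, i <> j -> ~ mx_peq (h i) (h j).

Definition cluster_pt (Gamma : 'M[C]_(n.+1) -> Prop) (z y : pvec) : Prop :=
  exists h : nat -> 'M[C]_(n.+1),
    (forall m, Gamma (h m)) /\ pw_distinct h /\ pcvg (fun m => h m *m z) y.

Definition Lambda (Gamma : 'M[C]_(n.+1) -> Prop) : pvec -> Prop :=
  pclosure (fun y => exists z : pvec, z != 0 /\ cluster_pt Gamma z y).

Definition cluster_set (Gamma : 'M[C]_(n.+1) -> Prop) (K : pvec -> Prop)
    (y : pvec) : Prop :=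
  exists (h : nat -> 'M[C]_(n.+1)) (k : nat -> pvec),
    (forall m, Gamma (h m)) /\ pw_distinct h /\
    (forall m, k m != 0 /\ K (k m)) /\ pcvg (fun m => h m *m k m) y.

Definition L2 (Gamma : 'M[C]_(n.+1) -> Prop) : pvec -> Prop :=
  pclosure (fun y => exists K : pvec -> Prop,
    pcompact K /\ (forall k, k != 0 -> K k -> ~ Lambda Gamma k) /\
    cluster_set Gamma K y).

Definition Lambda_Kul (Gamma : 'M[C]_(n.+1) -> Prop) : pvec -> Prop :=
  fun y => Lambda Gamma y \/ L2 Gamma y.

Definition cyclic_grp (g : 'M[C]_(n.+1)) : 'M[C]_(n.+1) -> Prop :=
  fun h => exists k : int, mx_peq (g ^ k) h.

Definition psl_finite_order (g : 'M[C]_(n.+1)) : Prop :=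
  exists k : nat, (0 < k)%N /\ exists c : C, g ^+ k = c%:M.

End Kulkarni.

(* Main.v *)
Require Import Defs.
From HB Require Import structures.
From mathcomp Require Import all_boot all_order all_algebra.
From mathcomp Require Import complex.
From mathcomp Require Import reals.
From mathcomp Require Import ring lra.
From mathcomp Require Import archimedean.
Import Order.TTheory GRing.Theory Num.Theory.
Local Open Scope ring_scope.
Section S.
Variable R : realType.
Local Notation C := (R[i]).
Definition nc (z : C) : R := Normc.normc z.
Lemma nc_norm (z : C) : `|z| = ((nc z)%:C)%C.
Proof. reflexivity. Qed.
Lemma nc_ge0 z : 0 <= nc z.
Proof. by case: z => a b; rewrite /nc /=; apply: sqrtr_ge0. Qed.
Lemma nc_bound z : nc z <= `|complex.Re z| + `|complex.Im z|.
Proof.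
case: z => a b; rewrite /nc /=.
have h : a ^+ 2 + b ^+ 2 <= (`|a| + `|b|) ^+ 2.
  have h1 : 0 <= `|a| * `|b| by rewrite mulr_ge0.
  rewrite sqrrD -[a ^+ 2]real_normK ?num_real // -[b ^+ 2]real_normK ?num_real //.
  nra.
apply: le_trans (ler_wsqrtr h) _.
by rewrite sqrtr_sqr ger0_norm // addr_ge0.
Qed.
Lemma nc_one_Re z : nc z = 1 -> -1 <= complex.Re z <= 1.
Proof.
case: z => a b; rewrite /nc /= => h.
have h2 : a ^+ 2 + b ^+ 2 = 1.
  by rewrite -(sqr_sqrtr (addr_ge0 (sqr_ge0 a) (sqr_ge0 b))) h expr1n.
apply/andP; split; nra.
Qed.
Lemma nc_one_Im z : nc z = 1 -> -1 <= complex.Im z <= 1.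
Proof.
case: z => a b; rewrite /nc /= => h.
have h2 : a ^+ 2 + b ^+ 2 = 1.
  by rewrite -(sqr_sqrtr (addr_ge0 (sqr_ge0 a) (sqr_ge0 b))) h expr1n.
apply/andP; split; nra.
Qed.
Lemma ReB (z w : C) : complex.Re (z - w) = complex.Re z - complex.Re w.
Proof. by case: z => a b; case: w => c d. Qed.
Lemma ImB (z w : C) : complex.Im (z - w) = complex.Im z - complex.Im w.
Proof. by case: z => a b; case: w => c d. Qed.
Lemma ncM z w : nc (z * w) = nc z * nc w.
Proof. exact: Normc.normcM. Qed.
Lemma ncX z k : nc (z ^+ k) = nc z ^+ k.
Proof. elim: k => [|k IH]; first by rewrite !expr0 /nc Normc.normc1.
by rewrite !exprS ncM IH. Qed.
Lemma ncD z w : nc (z + w) <= nc z + nc w.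
Proof. exact: le_normcD. Qed.
Lemma ncN z : nc (- z) = nc z.
Proof. exact: normcN. Qed.
Lemma nc0 : nc 0 = 0. Proof. exact: Normc.normc0. Qed.
Lemma nc_eq0 z : nc z = 0 -> z = 0. Proof. exact: Normc.eq0_normc. Qed.
From Stdlib Require Import Classical.
Lemma dirichlet m (l : 'I_m -> C) : (forall i, nc (l i) = 1) ->
  forall del : R, 0 < del -> exists d, (0 < d)%N /\ forall i, nc (l i ^+ d - 1) < del.
Proof.
move=> hl del del0.
pose eta := del / 2.
have eta0 : 0 < eta by rewrite divr_gt0.
pose part (b : bool) (z : C) : R := if b then complex.Re z else complex.Im z.
have part_bd : forall b i j, -1 <= part b (l i ^+ j) <= 1.
  move=> b i j; have h : nc (l i ^+ j) = 1 by rewrite ncX hl expr1n.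
  by case: b; [exact: nc_one_Re | exact: nc_one_Im].
pose bx (x : R) := Num.truncn ((x + 1) / eta).
pose K := (Num.truncn (2 / eta)).+1.
have bxK : forall x, -1 <= x <= 1 -> (bx x < K)%N.
  move=> x /andP[x1 x2]; rewrite /bx truncn_lt_nat; last first.
    by rewrite divr_ge0 ?(ltW eta0) //; lra.
  have [_ h] := andP (truncn_itv (divr_ge0 (ler0n R 2) (ltW eta0))).
  apply: le_lt_trans h; rewrite ler_pM2r ?invr_gt0 //; lra.
have bx_eq : forall x y, -1 <= x -> -1 <= y -> bx x = bx y -> `|x - y| < eta.
  move=> x y hx hy e.
  have hX : 0 <= (x + 1) / eta by rewrite divr_ge0 ?(ltW eta0) //; lra.
  have hY : 0 <= (y + 1) / eta by rewrite divr_ge0 ?(ltW eta0) //; lra.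
  have [a1 a2] := andP (truncn_itv hX).
  have [b1 b2] := andP (truncn_itv hY).
  rewrite /bx in e; rewrite e in a1 a2.
  have ex : x = (x + 1) / eta * eta - 1 by rewrite divfK ?gt_eqF // addrK.
  have ey : y = (y + 1) / eta * eta - 1 by rewrite divfK ?gt_eqF // addrK.
  rewrite ex ey opprB addrA addrNK -mulrBl normrM (gtr0_norm eta0).
  rewrite gtr_pMl // ltr_norml; apply/andP; split.
    move: a1 b2; rewrite -natr1; lra.
  move: a2 b1; rewrite -natr1; lra.
pose T := {ffun 'I_m * bool -> 'I_K}.
pose F (j : 'I_(#|T|.+1)) : T := [ffun p => inord (bx (part p.2 (l p.1 ^+ j)))].
have ninj : ~ injective F by move=> /leq_card; rewrite card_ord ltnn.
have [a [b [Fab ab]]] : exists a b, F a = F b /\ a != b.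
  apply: NNPP => H; apply: ninj => a b Fab; apply/eqP; apply: contraT => ab.
  by case: H; exists a, b.
wlog lt_ab : a b Fab ab / (a < b)%N.
  move=> W; case: (ltngtP a b) => h; first exact: (W a b).
    by apply: (W b a) => //; rewrite eq_sym.
  by move: ab; rewrite -(inj_eq val_inj) /= h eqxx.
exists (b - a)%N; split; first by rewrite subn_gt0.
move=> i.
have key : forall bb, `|part bb (l i ^+ b) - part bb (l i ^+ a)| < eta.
  move=> bb; have := congr1 (fun f : T => val (f (i, bb))) Fab.
  rewrite /= !ffunE /= !inordK ?bxK ?part_bd // => e.
  apply: bx_eq; first by case/andP: (part_bd bb i b).
    by case/andP: (part_bd bb i a).
  by rewrite e.
have e1 : l i ^+ b - l i ^+ a = l i ^+ a * (l i ^+ (b - a) - 1).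
  by rewrite mulrBr mulr1 -exprD subnKC // ltnW.
have : nc (l i ^+ b - l i ^+ a) < del.
  apply: le_lt_trans (nc_bound _) _.
  rewrite ReB ImB.
  have := key true; have := key false; rewrite /part /eta; lra.
by rewrite e1 ncM ncX hl expr1n mul1r.
Qed.
Lemma nc_sum (I : Type) (r : seq I) (P : pred I) (F : I -> C) :
  nc (\sum_(i <- r | P i) F i) <= \sum_(i <- r | P i) nc (F i).
Proof.
apply: (big_rec2 (fun x y => nc x <= y)); first by rewrite nc0.
by move=> i x y _ h; apply: le_trans (ncD _ _) _; rewrite lerD2l.
Qed.
Lemma le_sum1 (I : finType) (F : I -> R) i : (forall j, 0 <= F j) -> F i <= \sum_j F j.
Proof.
move=> h; rewrite (bigD1 i) //= lerDl; exact: sumr_ge0.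
Qed.
Arguments le_sum1 {I} F i _.
Definition md p q (A : 'M[C]_(p, q)) : R := \sum_i \sum_j nc (A i j).
Arguments md {p q} A.
Lemma md_ge0 p q (A : 'M[C]_(p, q)) : 0 <= md A.
Proof. by apply: sumr_ge0 => i _; apply: sumr_ge0 => j _; apply: nc_ge0. Qed.
Lemma md_entry p q (A : 'M[C]_(p, q)) i j : nc (A i j) <= md A.
Proof.
apply: (@le_trans _ _ (\sum_j nc (A i j))).
  exact: (le_sum1 (fun j => nc (A i j)) j (fun k => nc_ge0 _)).
apply: (le_sum1 (fun i => \sum_j nc (A i j)) i).
by move=> k; apply: sumr_ge0 => l _; apply: nc_ge0.
Qed.
Lemma md_mul p q r (A : 'M[C]_(p, q)) (B : 'M[C]_(q, r)) : md (A *m B) <= md A * md B.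
Proof.
rewrite /md.
have h1 : forall i j, nc ((A *m B) i j) <= \sum_k nc (A i k) * nc (B k j).
  move=> i j; rewrite mxE; apply: le_trans; first exact: nc_sum.
  by apply: ler_sum => k _; rewrite ncM.
apply: (@le_trans _ _ (\sum_i \sum_j \sum_k nc (A i k) * nc (B k j))).
  by apply: ler_sum => i _; apply: ler_sum => j _; exact: h1.
rewrite mulr_suml; apply: ler_sum => i _.
rewrite exchange_big /= mulr_suml; apply: ler_sum => k _.
rewrite -mulr_sumr; apply: ler_wpM2l; first exact: nc_ge0.
exact: le_sum1 (fun k => \sum_j nc (B k j)) k (fun k => sumr_ge0 _ (fun j _ => nc_ge0 _)).
Qed.
Lemma diag_mxM k (s t : 'rV[C]_k) : diag_mx s *m diag_mx t = diag_mx (\row_i (s 0 i * t 0 i)).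
Proof.
apply/matrixP => i j; rewrite mul_diag_mx !mxE.
by case: (i == j); rewrite ?mulr0n ?mulr1n ?mulr0.
Qed.
Lemma diag_mxX k (s : 'rV[C]_k.+1) d : (diag_mx s) ^+ d = diag_mx (\row_i (s 0 i ^+ d)).
Proof.
elim: d => [|d IH].
  apply/matrixP => i j; rewrite !mxE expr0 /=.
  by case: (i == j).
rewrite exprS IH -mulmxE diag_mxM; congr diag_mx; apply/matrixP => i j.
by rewrite !mxE exprS.
Qed.
Lemma diag_pow k (g : 'M[C]_(k.+1)) : diagonalizable g ->
  (forall a : C, eigenvalue g a -> `|a| = 1) ->
  exists (P Q : 'M[C]_(k.+1)) (lam : 'I_(k.+1) -> C), (forall i, nc (lam i) = 1) /\
    forall d, g ^+ d - 1 = Q *m diag_mx (\row_i (lam i ^+ d - 1)) *m P.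
Proof.
case=> P Punit /similar_diagPex [r /(similarP Punit) DP] heig.
pose Q := invmx P.
have QP : Q *m P = 1%:M by rewrite mulVmx.
have PQ : P *m Q = 1%:M by rewrite mulmxV.
have gE : g = Q *m diag_mx r *m P by rewrite -mulmxA -DP mulmxA QP mul1mx.
exists P, Q, (fun i => r 0 i); split.
  move=> i; have : eigenvalue g (r 0 i).
    apply/eigenvalueP; exists (row i P).
      by rewrite -row_mul DP row_mul row_diag_mx -scalemxAl rowE.
    apply/eqP => h0.
    have : row i P *m Q = 0 by rewrite h0 mul0mx.
    rewrite rowE -mulmxA PQ mulmx1 => /matrixP /(_ 0 i); rewrite !mxE !eqxx /=.
    by move/eqP; rewrite oner_eq0.
  move/heig; rewrite nc_norm => h; apply: complexI; exact: h.
move=> d.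
have -> : g ^+ d = Q *m (diag_mx r) ^+ d *m P.
  elim: d => [|d IH]; first by rewrite !expr0 mulmx1 QP.
  rewrite exprS IH -mulmxE {1}gE !mulmxA -[Q *m diag_mx r *m P *m Q]mulmxA PQ mulmx1.
  by rewrite exprS -mulmxE !mulmxA.
have -> : (1 : 'M[C]_(k.+1)) = Q *m 1%:M *m P by rewrite mulmx1 QP.
rewrite -mulmxBl -mulmxBr diag_mxX; congr (_ *m _ *m _).
apply/matrixP => i j; rewrite !mxE.
by case: (i == j); rewrite ?subr0.
Qed.
Arguments md_mul {p q r} A B.
Arguments md_ge0 {p q} A.
Arguments md_entry {p q} A i j.
Lemma md_diag k (s : 'rV[C]_k) (del : R) : 0 <= del -> (forall i, nc (s 0 i) <= del) ->
  md (diag_mx s) <= (k * k)%:R * del.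
Proof.
move=> d0 hs.
apply: (@le_trans _ _ (\sum_(i < k) \sum_(j < k) del)).
  apply: ler_sum => i _; apply: ler_sum => j _; rewrite mxE.
  by case: (i == j); rewrite ?mulr1n ?mulr0n ?nc0.
rewrite sumr_const sumr_const card_ord -mulrnA mulr_natl.
by [].
Qed.
Lemma md_gt0 p q (A : 'M[C]_(p, q)) : A != 0 -> 0 < md A.
Proof.
case/matrix0Pn => i [j] nz.
apply: (@lt_le_trans _ _ (nc (A i j))); last exact: md_entry.
rewrite lt_def nc_ge0 andbT; apply/eqP => /nc_eq0 h; by rewrite h eqxx in nz.
Qed.
Lemma close_pow k (g : 'M[C]_(k.+1)) : diagonalizable g ->
  (forall a : C, eigenvalue g a -> `|a| = 1) ->
  forall eps : R, 0 < eps -> exists d, (0 < d)%N /\ md (g ^+ d - 1) < eps.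
Proof.
move=> hd he eps e0.
have [P [Q [lam [hl hg]]]] := @diag_pow k g hd he.
pose M0 := md Q * md P * ((k.+1 * k.+1)%:R).
have M00 : 0 <= M0 by rewrite !mulr_ge0 ?md_ge0.
pose del := eps / (M0 + 1).
have del0 : 0 < del by rewrite divr_gt0 // ltr_wpDl.
have [d [d0 hdl]] := @dirichlet _ lam hl del del0.
exists d; split => //.
rewrite hg.
apply: le_lt_trans (md_mul _ _) _.
apply: (@le_lt_trans _ _ (md Q * ((k.+1 * k.+1)%:R * del) * md P)).
  apply: ler_wpM2r; first exact: md_ge0.
  apply: le_trans (md_mul _ _) _; apply: ler_wpM2l; first exact: md_ge0.
  apply: md_diag; first exact: ltW.
  by move=> i; rewrite mxE; apply: ltW.
have -> : md Q * ((k.+1 * k.+1)%:R * del) * md P = M0 * del.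
  by rewrite /M0; ring.
rewrite /del mulrA ltr_pdivrMr ?ltr_wpDl //.
nra.
Qed.
Lemma large k (g : 'M[C]_(k.+1)) : diagonalizable g ->
  (forall a : C, eigenvalue g a -> `|a| = 1) -> ~ psl_finite_order g ->
  forall N (eps : R), 0 < eps -> exists d, (N < d)%N /\ md (g ^+ d - 1) < eps.
Proof.
move=> hd he hf; elim=> [|N IH] eps e0; first exact: close_pow.
have nz : g ^+ N.+1 - 1 != 0.
  apply/eqP => h; apply: hf; exists N.+1; split => //; exists 1.
  by apply/eqP; rewrite -subr_eq0 h.
have m0 : 0 < Num.min eps (md (g ^+ N.+1 - 1)).
  by rewrite lt_min e0 md_gt0.
have [d [Nd hd']] := IH _ m0.
exists d; split; last by apply: lt_le_trans hd' _; rewrite ge_min lexx.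
rewrite ltn_neqAle Nd andbT; apply/eqP => e; move: hd'; rewrite -e.
by rewrite lt_min ltxx andbF.
Qed.
Lemma g_unit k (g : 'M[C]_(k.+1)) : \det g = 1 -> g \in unitmx.
Proof. by move=> h; rewrite unitmxE h unitr1. Qed.
Lemma infinite_case k (g : 'M[C]_(k.+1)) : \det g = 1 -> diagonalizable g ->
  (forall a : C, eigenvalue g a -> `|a| = 1) -> ~ psl_finite_order g ->
  forall y : pvec R k, y != 0 -> Lambda (cyclic_grp g) y.
Proof.
move=> hdet hd he hf y y0.
have gu := @g_unit _ _ hdet.
have hL := @large _ _ hd he hf.
pose Pr N m d := (N < d)%N && (md (g ^+ d - 1) < (m.+1%:R)^-1).
have ex : forall N m, exists d, Pr N m d.
  move=> N m; have [d [h1 h2]] := hL N (m.+1%:R)^-1 ltac:(by rewrite invr_gt0).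
  by exists d; rewrite /Pr h1 h2.
have [F FP] : exists F : nat -> nat -> nat, forall N m, Pr N m (F N m).
  by exists (fun N m => xchoose (ex N m)) => N m; exact: xchooseP.
have [kk [hk0 hkS]] : exists kk : nat -> nat,
    kk 0%N = F 0%N 0%N /\ forall m, kk m.+1 = F (kk m) m.+1.
  by exists (fix kk m := if m is m'.+1 then F (kk m') m else F 0%N 0%N).
have hk1 : forall m, (kk m < kk m.+1)%N.
  by move=> m; rewrite hkS; case/andP: (FP (kk m) m.+1).
have hk2 : forall m, md (g ^+ kk m - 1) < (m.+1%:R)^-1.
  case=> [|m]; first by rewrite hk0; case/andP: (FP 0%N 0%N).
  by rewrite hkS; case/andP: (FP (kk m) m.+1).
have mono : forall i j, (i < j)%N -> (kk i < kk j)%N.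
  move=> i; elim=> [//|j IH]; rewrite ltnS leq_eqVlt => /orP[/eqP -> //|/IH h].
  exact: ltn_trans h (hk1 j).
pose h m := g ^+ kk m.
have hu : forall m, h m \in unitmx by move=> m; exact: unitrX.
have hy : forall m, h m *m y != 0.
  move=> m; apply/eqP => e; move/eqP: y0; apply.
  by rewrite -(mulKmx (hu m) y) e mulmx0.
have cvg0 : vcvg (fun _ => 1 *: y) y.
  by move=> e e0; exists 0%N => m _ i; rewrite scale1r subrr normr0.
exists (fun _ => y); split; last first.
  by split => //; split => //; exists (fun _ => 1); split => //; move=> _; exact: oner_neq0.
move=> _; exists y; split => //; exists h; split.
  by move=> m; exists (kk m); exists 1; split; [exact: oner_neq0 | rewrite scale1r].
split.
  have aux : forall i j, (i < j)%N -> ~ mx_peq (h i) (h j).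
    move=> i j ij [c [c0 e]]; apply: hf; exists (kk j - kk i)%N; split.
      by rewrite subn_gt0; apply: mono.
    exists c; apply: (mulrI (hu i)).
    have ij' : (kk i <= kk j)%N by apply: ltnW; apply: mono.
    rewrite /h in e; rewrite -exprD subnKC // e -mulmxE mul_mx_scalar.
    by [].
  move=> i j ij; case: (ltngtP i j) => c; first exact: aux.
    move=> [a [a0 e]]; apply: (aux j i c); exists a^-1; split; first by rewrite invr_eq0.
    by rewrite e scalerA mulVf // scale1r.
  by move: ij; rewrite c.
split=> //; split=> //; exists (fun _ => 1); split; first by move=> _; exact: oner_neq0.
move=> e e0.
have eE : e = (complex.Re e)%:C%C.
  by move: e0; rewrite ltcE /= => /andP[/eqP h0 _]; case: e h0 => a b /= ->.
have er0 : 0 < complex.Re e by move: e0; rewrite ltcE /= => /andP[_].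
pose N := Num.truncn (md y / complex.Re e).
exists N => m Nm i.
rewrite scale1r nc_norm eE ltcR.
have -> : (h m *m y) i 0 - y i 0 = ((h m - 1) *m y) i 0.
  by rewrite mulmxBl mul1mx !mxE.
apply: le_lt_trans (md_entry _ _ _) _.
apply: le_lt_trans (md_mul _ _) _.
apply: (@le_lt_trans _ _ ((m.+1%:R)^-1 * md y)).
  by apply: ler_wpM2r; [exact: md_ge0 | exact: ltW (hk2 m)].
rewrite mulrC ltr_pdivrMr ?ltr0Sn //.
have [_ t2] := andP (truncn_itv (divr_ge0 (md_ge0 y) (ltW er0))).
move: t2; rewrite -/N ltr_pdivrMr // => t2.
apply: (@lt_le_trans _ _ ((N.+1)%:R * complex.Re e)) => //.
by rewrite mulrC ler_wpM2l ?(ltW er0) // ler_nat.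
Qed.
From Stdlib Require Import IndefiniteDescription.
Lemma finite_case k (g : 'M[C]_(k.+1)) : \det g = 1 -> psl_finite_order g ->
  forall h : nat -> 'M[C]_(k.+1), (forall m, cyclic_grp g (h m)) -> ~ pw_distinct h.
Proof.
move=> hdet [K [K0 [c gK]]] h hG hpw.
have gu := @g_unit _ _ hdet.
have c0 : c != 0.
  apply/eqP => c00; have : g ^+ K \in unitmx by exact: unitrX.
  by rewrite gK c00 unitmxE det_scalar expr0n /= unitr0.
have cu : c \is a GRing.unit by rewrite unitfE.
have red : forall z : int, exists r : 'I_K, exists a : C, a != 0 /\ g ^ z = a *: g ^+ r.
  move=> z.
  have Kz : (K%:Z != 0) by rewrite eqz_nat -lt0n.
  have rge0 := modz_ge0 z Kz.
  have rlt : (z %% K)%Z < K%:Z by rewrite ltz_pmod.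
  have [r er] : exists r : nat, (z %% K)%Z = r%:Z.
    by exists `|(z %% K)%Z|%N; rewrite gez0_abs.
  have rK : (r < K)%N by rewrite -ltz_nat -er.
  exists (Ordinal rK), (c ^ ((z %/ K)%Z)); split; first by rewrite expfz_neq0.
  rewrite {1}(divz_eq z K%:Z) exprzDr // mulrC -exprz_exp er /=.
  have -> : g ^ K%:Z = c%:M by rewrite -gK.
  by rewrite -(rmorphXz (scalar_mx : C -> 'M_(k.+1))) // -mulmxE mul_scalar_mx.
have hr : forall m, exists r : 'I_K, exists a : C, a != 0 /\ h m = a *: g ^+ r.
  move=> m; have [z [b [b0 e]]] := hG m.
  have [r [a [a0 e2]]] := red z.
  by exists r, (b * a); split; [rewrite mulf_neq0 | rewrite e e2 scalerA].
pose fr m := proj1_sig (constructive_indefinite_description _ (hr m)).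
have frP : forall m, exists a : C, a != 0 /\ h m = a *: g ^+ fr m.
  by move=> m; exact: (proj2_sig (constructive_indefinite_description _ (hr m))).
pose f (i : 'I_K.+1) : 'I_K := fr i.
have ninj : ~ injective f by move=> /leq_card; rewrite !card_ord ltnn.
have [i [j [fij ij]]] : exists i j, f i = f j /\ i != j.
  apply: NNPP => H; apply: ninj => i j fij; apply/eqP; apply: contraT => ij.
  by case: H; exists i, j.
have [a [a0 ea]] := frP i.
have [b [b0 eb]] := frP j.
apply: (hpw i j).
  by move=> e; move: ij; rewrite -(inj_eq val_inj) /= e eqxx.
exists (b / a); split; first by rewrite mulf_neq0 ?invr_eq0.
rewrite ea eb scalerA divfK //.
by move: fij; rewrite /f => ->.
Qed.
End S.

Theorem mainTheorem10 (R : realType) (n : nat) (g : 'M[R[i]]_(n.+1)) :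
  (0 < n)%N ->
  \det g = 1 ->
  diagonalizable g ->
  (forall a : R[i], eigenvalue g a -> `|a| = 1) ->
  (psl_finite_order g -> forall y : pvec R n, y != 0 -> ~ Lambda_Kul (cyclic_grp g) y) /\
  (~ psl_finite_order g -> forall y : pvec R n, y != 0 -> Lambda_Kul (cyclic_grp g) y).
Proof.
move=> _ hdet hd he; split.
  move=> hf y y0 [[x [hx _]]|[x [hx _]]].
    have [z [_ [h [hG [hpw _]]]]] := hx 0%N.
    exact: (@finite_case R n g hdet hf h hG hpw).
  have [K [_ [_ [h [kk [hG [hpw _]]]]]]] := hx 0%N.
  exact: (@finite_case R n g hdet hf h hG hpw).
move=> hf y y0; left; exact: (@infinite_case R n g hdet hd he hf y y0).
Qed.
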